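(* Let $\mathcal I=\mathbb R^d$ with the standard inner product, let $\mathcal G$ be a compact Abelian group with normalized Haar measure $dg$ acting on $\mathcal I$ by a unitary representation, and let $\mathcal S$ be the unit sphere of $\mathcal I$ with normalized uniform measure $u$. For $I\in\mathcal I$ and $t\in\mathcal S$ let $\mu^t(I)$ be the cumulative distribution function of the law of $g\mapsto\langle I,gt\rangle$ on $(\mathcal G,dg)$, i.e. $\mu^t(I)(b)=\int H(b-\langle I,gt\rangle)\,dg$. Let $d_\infty(f,f')=\sup_{s\in\mathbb R}|f(s)-f'(s)|$ and define $$d(I,I')=\int d_\infty(\mu^t(I),\mu^t(I'))\,du(t),\qquad \widehat d(I,I')=\frac1k\sum_{i=1}^k d_\infty(\mu^{t_i}(I),\mu^{t_i}(I')),$$ where $t_1,\dots,t_k$ are templates drawn independently from $u$. Consider a set $\mathcal I_n$ of $n$ points of $\mathcal I$. There is a constant $c$ such that if $k\ge\frac{2}{c\epsilon^2}\log\frac n\delta$, then with probability $1-\delta^2$, $$|d(I,I')-\widehat d(I,I')|\le\epsilon\quad\text{for all } I,I'\in\mathcal I_n.$$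
   Context: $H$ is the Heaviside step function. *)

(* Defs.v *)
From HB Require Import structures.
From mathcomp Require Import all_boot all_order all_algebra.
From mathcomp Require Import all_classical all_reals all_analysis.
Set Implicit Arguments. Unset Strict Implicit. Unset Printing Implicit Defensive.
Import Order.TTheory GRing.Theory Num.Theory.
Import numFieldNormedType.Exports.
Local Open Scope classical_set_scope.
Local Open Scope ring_scope.

Section defs.
Variable R : realType.

(* Heaviside step function, H(x) = 1 for x >= 0 (so that mu^t(I) is a CDF). *)
Definition heaviside (x : R) : R := if 0 <= x then 1 else 0.

(* Vectors of R^d are d.-tuples (product sigma-algebra of Borel sets). *)
Definition dotp (d : nat) (x y : d.-tuple R) : R :=
  \sum_(i < d) tnth x i * tnth y i.

Definition mact (d : nat) (M : 'M[R]_d) (x : d.-tuple R) : d.-tuple R :=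
  [tuple \sum_(j < d) M i j * tnth x j | i < d].

Definition orthogonal_mx (d : nat) (M : 'M[R]_d) : Prop := M *m M^T = 1%:M.

Definition unit_sphere (d : nat) : set (d.-tuple R) := [set t | dotp t t = 1].

(* u is the normalized uniform measure on the unit sphere: the probability
   measure on R^d carried by the sphere and invariant under all orthogonal
   transformations. *)
Definition uniform_on_sphere (d : nat)
  (u : probability (d.-tuple R) R) : Prop :=
  u (@unit_sphere d) = 1%E /\
  forall Q : 'M[R]_d, orthogonal_mx Q ->
    forall A : set (d.-tuple R), measurable A -> u (mact Q @^-1` A) = u A.

Definition mutually_independent dO (O : measurableType dO) (P : probability O R)
  dT (T : measurableType dT) (k : nat) (X : 'I_k -> O -> T) : Prop :=
  forall A : 'I_k -> set T, (forall i, measurable (A i)) ->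
    P (\bigcap_(i in [set: 'I_k]) (X i @^-1` A i)) =
    (\prod_(i < k) P (X i @^-1` A i))%E.

Definition dinf (f f' : R -> R) : R := sup (range (fun s => `|f s - f' s|)).

End defs.

Definition gcarrier (G : topologicalZmodType) : Type := G.
HB.instance Definition _ (G : topologicalZmodType) :=
  Choice.on (gcarrier G).
HB.instance Definition _ (G : topologicalZmodType) :=
  isPointed.Build (gcarrier G) (0%R : G).
Notation gborel G := (@g_sigma_algebraType (gcarrier G) (@open G)).

Section group_defs.
Variables (R : realType) (G : topologicalZmodType).

Definition haar_prob (PG : probability (gborel G) R) : Prop :=
  forall (g : G) (A : set (gborel G)), measurable A ->
    PG ((fun x : G => g + x) @^-1` A) = PG A.

Definition orth_rep (d : nat) (rho : G -> 'M[R]_d) : Prop :=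
  [/\ rho 0 = 1%:M,
      forall g h, rho (g + h) = rho g *m rho h,
      forall g, orthogonal_mx (rho g) &
      forall i j, continuous (fun g => rho g i j)].

Definition mu_cdf (d : nat) (PG : probability (gborel G) R) (rho : G -> 'M[R]_d)
  (t I : d.-tuple R) (b : R) : R :=
  fine (\int[PG]_(g in [set: gborel G])
          (heaviside (b - dotp I (mact (rho (g : G)) t)))%:E).

Definition dist_mu (d : nat) (PG : probability (gborel G) R) (rho : G -> 'M[R]_d)
  (u : probability (d.-tuple R) R) (I I' : d.-tuple R) : R :=
  fine (\int[u]_(t in [set: d.-tuple R])
          (dinf (mu_cdf PG rho t I) (mu_cdf PG rho t I'))%:E).

Definition dist_hat (d k : nat) (PG : probability (gborel G) R) (rho : G -> 'M[R]_d)
  (ts : 'I_k -> d.-tuple R) (I I' : d.-tuple R) : R :=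
  k%:R^-1 * \sum_(i < k) dinf (mu_cdf PG rho (ts i) I) (mu_cdf PG rho (ts i) I').

End group_defs.

(* Main.v *)
Require Import Defs.
From HB Require Import structures.
From mathcomp Require Import all_boot all_order all_algebra.
From mathcomp Require Import all_classical all_reals all_analysis.
From mathcomp Require Import measurable_realfun.
From mathcomp Require Import lra ring.
Import Order.TTheory GRing.Theory Num.Theory.
Import numFieldNormedType.Exports.
Local Open Scope classical_set_scope.
Local Open Scope ring_scope.
Lemma prob_fin (R : realType) dT (T : measurableType dT) (P : probability T R) A :
  measurable A -> P A \is a fin_num.
Proof.
move=> mA; rewrite ge0_fin_numE //.
exact: (le_lt_trans (probability_le1 _ mA) (ltry 1)).
Qed.
Arguments prob_fin {R dT T} P {A}.

Section partA.
Variables (R : realType) (G : topologicalZmodType) (PG : probability (gborel G) R).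
Variables (d : nat) (rho : G -> 'M[R]_d).
Hypothesis rho_cont : forall i j, continuous (fun g => rho g i j).

Lemma meas_rho i j : measurable_fun setT (fun g : gborel G => rho g i j).
Proof.
apply: (measurability _ (measurable_realfun.RGenOpens.measurableE R)).
move=> _ [_ [a [b ->]] <-]; rewrite setTI.
apply: sub_sigma_algebra => /=.
apply: (continuousP _).1; first exact: rho_cont.
exact: interval_open.
Qed.

Definition xf (I : d.-tuple R) (p : (gborel G * d.-tuple R)%type) : R :=
  dotp I (mact (rho p.1) p.2).

Lemma meas_xf I : measurable_fun setT (xf I).
Proof.
rewrite /xf /dotp.
apply: measurable_sum => i.
apply: measurable_funM; first exact: measurable_cst.
under eq_fun do rewrite tnth_mktuple.
apply: measurable_sum => j.
apply: measurable_funM.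
  exact: (measurableT_comp (meas_rho i j) measurable_fst).
exact: (measurableT_comp (measurable_tnth j) measurable_snd).
Qed.

Definition xg (I t : d.-tuple R) (g : gborel G) : R := dotp I (mact (rho g) t).

Lemma meas_xg I t : measurable_fun setT (xg I t).
Proof.
rewrite /xg /dotp.
apply: measurable_sum => i.
apply: measurable_funM; first exact: measurable_cst.
under eq_fun do rewrite tnth_mktuple.
apply: measurable_sum => j.
apply: measurable_funM; first exact: meas_rho.
exact: measurable_cst.
Qed.

Definition Sset (I t : d.-tuple R) (b : R) : set (gborel G) := [set g | xg I t g <= b].

Lemma meas_Sset I t b : measurable (Sset I t b).
Proof.
rewrite /Sset -[X in measurable X]setTI.
have -> : [set g | xg I t g <= b] = xg I t @^-1` `]-oo, b]%classic.
  by apply/seteqP; split => g /=; rewrite in_itv /=.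
by apply: meas_xg => //; exact: measurable_itv.
Qed.

Lemma cdfE t I b : mu_cdf PG rho t I b = fine (PG (Sset I t b)).
Proof.
rewrite /mu_cdf.
have -> : (fun g : gborel G => (heaviside (b - dotp I (mact (rho g) t)))%:E)
   = (fun g => (\1_(Sset I t b) g)%:E).
  apply/funext => g; rewrite /heaviside indicE subr_ge0; congr (_%:E).
  have -> : (g \in Sset I t b) = (dotp I (mact (rho g) t) <= b).
    by apply/idP/idP; rewrite in_setE.
  by case: ifP.
rewrite (integral_indic _ _ (meas_Sset I t b)) //.
by congr (fine (PG _)); apply/seteqP; split => x //= [].
Qed.

Lemma cdf_ge0 t I b : 0 <= mu_cdf PG rho t I b.
Proof. by rewrite cdfE fine_ge0. Qed.

Lemma cdf_le1 t I b : mu_cdf PG rho t I b <= 1.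
Proof.
rewrite cdfE -lee_fin fineK; last by apply: (prob_fin PG); exact: meas_Sset.
exact: probability_le1 (meas_Sset _ _ _).
Qed.

Lemma cdf_mono t I b b' : b <= b' -> mu_cdf PG rho t I b <= mu_cdf PG rho t I b'.
Proof.
move=> bb; rewrite !cdfE; apply: fine_le; try by apply: (prob_fin PG); exact: meas_Sset.
apply: le_measure; rewrite ?inE; try exact: meas_Sset.
by move=> g; rewrite /Sset /= => /le_trans; apply.
Qed.

Lemma natinv_lt (e : R) : 0 < e -> exists N : nat, (N.+1%:R)^-1 < e.
Proof.
move=> e0; exists (Num.truncn e^-1).
have H := truncnS_gt (e^-1).
by rewrite -[X in _ < X]invrK ltf_pV2 ?posrE ?invr_gt0 // (lt_trans _ H) ?invr_gt0.
Qed.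

Lemma cdf_rcont t I b e : 0 < e ->
  exists N : nat, mu_cdf PG rho t I (b + (N.+1%:R)^-1) <= mu_cdf PG rho t I b + e.
Proof.
move=> e0.
pose F n := Sset I t (b + (n.+1%:R)^-1).
have mF n : measurable (F n) by exact: meas_Sset.
have capF : \bigcap_n F n = Sset I t b.
  apply/seteqP; split => g; rewrite /F /Sset /=.
    move=> H; apply/ler_addgt0Pr => e' e'0.
    have [N HN] := natinv_lt _ e'0.
    by apply: (le_trans (H N Logic.I)); rewrite lerD2l ltW.
  move=> H n _; apply: (le_trans H); rewrite lerDl invr_ge0 //.
have niF : nonincreasing_seq F.
  move=> m n mn; apply/subsetPset => g; rewrite /F /Sset /=.
  move=> /le_trans; apply; rewrite lerD2l lef_pV2 ?posrE // ler_nat.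
  by [].
have := nonincreasing_cvg_mu (mu:=PG) _ mF _ niF.
rewrite capF => /(_ (le_lt_trans (probability_le1 PG (mF 0%N)) (ltry _)) (meas_Sset _ _ _)).
move=> Hc.
have Hc' : (PG \o F) @ \oo --> (fine (PG (Sset I t b)))%:E.
  by rewrite fineK //; apply: (prob_fin PG); exact: meas_Sset.
have [_ Hf] := (fine_cvgP _ _).1 Hc'.
move: Hf => /cvgr_dist_le /(_ e e0) [N _ HN].
exists N; rewrite !cdfE.
have := HN N (leqnn N); rewrite /= -/(F N).
move=> /ler_normlP [H1 _]; rewrite /= in H1; lra.
Qed.

Lemma dinf_ub (f f' : R -> R) B s : (forall s, `|f s - f' s| <= B) ->
  `|f s - f' s| <= dinf f f'.
Proof.
move=> HB; apply: ub_le_sup; last by exists s.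
by exists B => _ [x _ <-].
Qed.

Lemma dinf_le (f f' : R -> R) B : (forall s, `|f s - f' s| <= B) ->
  dinf f f' <= B.
Proof.
move=> HB; apply: ge_sup; first by exists `|f 0 - f' 0|, 0.
by move=> _ [x _ <-].
Qed.

Definition Y (I I' t : d.-tuple R) : R :=
  dinf (mu_cdf PG rho t I) (mu_cdf PG rho t I').

Lemma cdf_diff_le1 t I I' s : `|mu_cdf PG rho t I s - mu_cdf PG rho t I' s| <= 1.
Proof.
have := cdf_ge0 t I s; have := cdf_le1 t I s.
have := cdf_ge0 t I' s; have := cdf_le1 t I' s.
move=> *; apply/ler_normlP; split; lra.
Qed.

Lemma Y_ge0 I I' t : 0 <= Y I I' t.
Proof.
apply: (le_trans (normr_ge0 (mu_cdf PG rho t I 0 - mu_cdf PG rho t I' 0))).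
apply: dinf_ub => s; exact: cdf_diff_le1.
Qed.

Lemma Y_le1 I I' t : Y I I' t <= 1.
Proof. apply: dinf_le => s; exact: cdf_diff_le1. Qed.

Lemma Y_ub I I' t s :
  `|mu_cdf PG rho t I s - mu_cdf PG rho t I' s| <= Y I I' t.
Proof. apply: dinf_ub => s'; exact: cdf_diff_le1. Qed.

Definition en (n : nat) : R :=
  if (unpickle n : option (int * nat)) is Some p then p.1%:~R / (p.2.+1)%:R else 0.

Lemma en_dense b (N : nat) : exists n, b < en n /\ en n <= b + (N.+1%:R)^-1.
Proof.
pose z : int := (Num.floor (b * N.+1%:R) + 1)%R.
exists (pickle (z, N)); rewrite /en pickleK /=.
have hN : (0 : R) < N.+1%:R by rewrite ltr0n.
split.
  rewrite ltr_pdivlMr //; exact: floorD1_gt.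
rewrite ler_pdivrMr // mulrDl mulVf ?gt_eqF //.
rewrite /z intrD lerD2r; exact: Num.Theory.floor_le.
Qed.

Definition Aset (I : d.-tuple R) (q : R) : set (gborel G * d.-tuple R)%type :=
  [set p | xf I p <= q].

Lemma meas_Aset I q : measurable (Aset I q).
Proof.
rewrite /Aset -[X in measurable X]setTI.
have -> : [set p | xf I p <= q] = xf I @^-1` `]-oo, q]%classic.
  by apply/seteqP; split => g /=; rewrite in_itv /=.
by apply: meas_xf => //; exact: measurable_itv.
Qed.

Lemma meas_Fq I q : measurable_fun setT (fun t => mu_cdf PG rho t I q).
Proof.
have -> : (fun t => mu_cdf PG rho t I q) = fine \o (PG \o ysection (Aset I q)).
  apply/funext => t; rewrite cdfE /=; congr (fine (PG _)).
  by apply/seteqP; split => g; rewrite /ysection /Sset /Aset /= in_setE.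
apply: measurableT_comp => //.
exact: measurable_fun_ysection (meas_Aset I q).
Qed.

Definition hseq (I I' t : d.-tuple R) (n : nat) : R :=
  `|mu_cdf PG rho t I (en n) - mu_cdf PG rho t I' (en n)|.

Lemma Y_sup I I' t : Y I I' t = sup (range (hseq I I' t)).
Proof.
have ubB : has_ubound (range (hseq I I' t)).
  by exists 1 => _ [n _ <-]; exact: cdf_diff_le1.
apply/le_anti/andP; split; last first.
  apply: ge_sup; first by exists (hseq I I' t 0), 0%N.
  by move=> _ [n _ <-]; exact: Y_ub.
apply: dinf_le => s.
apply/ler_addgt0Pr => g g0.
have g20 : 0 < g / 2 by rewrite divr_gt0.
have [N1 HN1] := cdf_rcont t I s _ g20.
have [N2 HN2] := cdf_rcont t I' s _ g20.
have [n [Hn1 Hn2]] := en_dense s (maxn N1 N2).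
have le1 : en n <= s + (N1.+1%:R)^-1.
  apply: (le_trans Hn2); rewrite lerD2l lef_pV2 ?posrE ?ltr0n // ler_nat.
  by rewrite ltnS leq_maxl.
have le2 : en n <= s + (N2.+1%:R)^-1.
  apply: (le_trans Hn2); rewrite lerD2l lef_pV2 ?posrE ?ltr0n // ler_nat.
  by rewrite ltnS leq_maxr.
have a1 := cdf_mono t I _ _ (ltW Hn1).
have a2 := cdf_mono t I' _ _ (ltW Hn1).
have b1 := le_trans (cdf_mono t I _ _ le1) HN1.
have b2 := le_trans (cdf_mono t I' _ _ le2) HN2.
have hB : hseq I I' t n <= sup (range (hseq I I' t)).
  by apply: ub_le_sup => //; exists n.
move: hB; rewrite /hseq.
set x1 := mu_cdf PG rho t I s in a1 b1 *.
set x2 := mu_cdf PG rho t I' s in a2 b2 *.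
set y1 := mu_cdf PG rho t I (en n) in a1 b1 *.
set y2 := mu_cdf PG rho t I' (en n) in a2 b2 *.
set S := sup _.
move=> /ler_normlP [h1 h2]; apply/ler_normlP; split; lra.
Qed.

Lemma meas_Y I I' : measurable_fun setT (Y I I').
Proof.
have -> : Y I I' = (fun t => sups ((fun n x => hseq I I' x n) ^~ t) 0%N).
  apply/funext => t; rewrite Y_sup /sups; congr sup.
  by apply/seteqP; split => _ [n _ <-]; exists n.
apply: measurable_fun_sups.
  by move=> t _; exists 1 => _ [n _ <-]; exact: cdf_diff_le1.
move=> n; rewrite /hseq.
have := measurableT_comp (@normr_measurable R setT)
  (measurable_funB (meas_Fq I (en n)) (meas_Fq I' (en n))).
by [].
Qed.
End partA.

Section partB.
Variables (R : realType) (dT : measure_display) (T : measurableType dT).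
Variable (u : probability T R).
Variable (Yf : T -> R).
Hypotheses (mY : measurable_fun setT Yf) (Y0 : forall t, 0 <= Yf t) (Y1 : forall t, Yf t <= 1).
Variable M : nat.
Hypothesis M0 : (0 < M)%N.

Definition vv (m : 'I_M.+1) : R := m%:R / M%:R.
Definition BB (m : 'I_M.+1) : set T := [set t | m%:R - 1 < Yf t * M%:R <= m%:R].

Lemma BB_meas m : measurable (BB m).
Proof.
rewrite /BB -[X in measurable X]setTI.
have -> : [set t | m%:R - 1 < Yf t * M%:R <= m%:R] =
    (fun t => Yf t * M%:R) @^-1` `]m%:R - 1, m%:R]%classic.
  by apply/seteqP; split => g /=; rewrite in_itv /=.
apply: (measurable_funM mY (measurable_cst _)) => //; exact: measurable_itv.
Qed.

Lemma BB_ex t : exists m, BB m t.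
Proof.
have hex : exists n, Yf t * M%:R <= n%:R.
  by exists M; rewrite -[X in _ <= X]mul1r ler_wpM2r.
case: (ex_minnP hex) => m Hm Hmin.
have mM : (m <= M)%N.
  by apply: Hmin; rewrite -[X in _ <= X]mul1r ler_wpM2r.
exists (Ordinal (n:=M.+1) (m:=m) mM); rewrite /BB /=; apply/andP; split => //.
case: m Hm Hmin mM => [|m] Hm Hmin mM.
  by have := Y0 t; have : 0 <= M%:R :> R by []; move=> *; nra.
have : ~~ (Yf t * M%:R <= m%:R).
  by apply/negP => /Hmin; rewrite ltnn.
rewrite -ltNge => h; rewrite -natr1 ; lra.
Qed.

Lemma BB_uniq t m1 m2 : BB m1 t -> BB m2 t -> m1 = m2.
Proof.
rewrite /BB /= => /andP[a1 b1] /andP[a2 b2]; apply/val_inj/eqP; rewrite eqn_leq.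
have h1 : (m1%:R : R) < m2%:R + 1 by lra.
have h2 : (m2%:R : R) < m1%:R + 1 by lra.
by rewrite -ltnS -(ltr_nat R) -natr1 h1 /= -ltnS -(ltr_nat R) -natr1.
Qed.

Definition idx (t : T) : 'I_M.+1 := proj1_sig (cid (BB_ex t)).
Lemma idxP t : BB (idx t) t.
Proof. exact: (proj2_sig (cid (BB_ex t))). Qed.

Lemma vv_bnd t : Yf t <= vv (idx t) <= Yf t + M%:R^-1.
Proof.
have /andP[a b] := idxP t.
have hM : (0 : R) < M%:R by rewrite ltr0n.
rewrite /vv; apply/andP; split.
  by rewrite ler_pdivlMr.
rewrite ler_pdivrMr // mulrDl mulVf ?gt_eqF //; lra.
Qed.


Definition pp (m : 'I_M.+1) : R := fine (u (BB m)).

Lemma u_fin A : measurable A -> u A \is a fin_num.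
Proof.
move=> mA; rewrite ge0_fin_numE //.
exact: (le_lt_trans (probability_le1 _ mA) (ltry 1)).
Qed.

Lemma u_BB m : u (BB m) = (pp m)%:E.
Proof. by rewrite /pp fineK //; apply: u_fin; exact: BB_meas. Qed.

Lemma pp_ge0 m : 0 <= pp m.
Proof. by rewrite /pp fine_ge0. Qed.

Lemma sum_indic (c : 'I_M.+1 -> R) t :
  \sum_(m < M.+1) c m * \1_(BB m) t = c (idx t).
Proof.
rewrite (bigD1 (idx t)) //= big1 ?addr0.
  by rewrite indicE mem_set ?mulr1 //; exact: idxP.
move=> m hm; rewrite indicE memNset ?mulr0 //.
by move=> h; move: hm; rewrite (BB_uniq _ _ _ h (idxP t)) eqxx.
Qed.

Lemma int_c (c : 'I_M.+1 -> R) : (forall m, 0 <= c m) ->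
  (\int[u]_(x in setT) (c (idx x))%:E = (\sum_(m < M.+1) c m * pp m)%:E)%E.
Proof.
move=> c0.
under eq_integral do rewrite -sum_indic -sumEFin.
rewrite ge0_integral_sum //; last first.
- by move=> m x _; rewrite lee_fin mulr_ge0 // indicE.
- move=> m; apply/measurable_EFinP; apply: measurable_funM.
    exact: measurable_cst.
  apply: measurable_indic; exact: BB_meas.
rewrite -sumEFin; apply: eq_bigr => m _.
under eq_integral do rewrite EFinM.
rewrite ge0_integralZl ?lee_fin //; last first.
  by apply/measurable_EFinP; apply: measurable_indic; exact: BB_meas.
rewrite integral_indic; last exact: BB_meas.
by rewrite setIT /pp EFinM fineK //; apply: u_fin; exact: BB_meas.
exact: measurableT.
Qed.

Lemma sum_pp : \sum_(m < M.+1) pp m = 1.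
Proof.
have := int_c (fun=> 1) (fun=> ler01).
rewrite integral_cst //.
rewrite [X in (_ * X)%E = _]probability_setT mul1e.
under eq_bigr do rewrite mul1r.
by move=> [->].
Qed.

Definition muZ : R := \sum_(m < M.+1) pp m * vv m.
Definition muY : R := fine (\int[u]_(x in setT) (Yf x)%:E).

Lemma intY_fin : (\int[u]_(x in setT) (Yf x)%:E)%E \is a fin_num.
Proof.
rewrite ge0_fin_numE; last by apply: integral_ge0 => x _; rewrite lee_fin.
apply: (le_lt_trans (y := 1%:E)); last exact: ltry.
apply: (@le_trans _ _ (\int[u]_(x in setT) (cst (1%:E : \bar R) x))%E).
  apply: ge0_le_integral => //; try (by move=> x _; rewrite lee_fin).
  exact/measurable_EFinP.
by rewrite integral_cst // [X in (_ * X)%E]probability_setT mul1e.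
Qed.

Lemma muY_ge0 : 0 <= muY.
Proof. by rewrite /muY fine_ge0 // integral_ge0 // => x _; rewrite lee_fin. Qed.

Lemma muY_bnd : muY <= muZ <= muY + M%:R^-1.
Proof.
have hZ : (\int[u]_(x in setT) (vv (idx x))%:E = muZ%:E)%E.
  rewrite int_c ?/muZ; last by move=> m; rewrite /vv divr_ge0.
  by congr (_%:E); apply: eq_bigr => m _; rewrite mulrC.
have mZ : measurable_fun setT (fun x => (vv (idx x))%:E).
  apply/measurable_EFinP.
  have -> : (fun x => vv (idx x)) = (fun x => \sum_(m < M.+1) vv m * \1_(BB m) x).
    by apply/funext => x; rewrite sum_indic.
  apply: measurable_sum => m; apply: measurable_funM; first exact: measurable_cst.
  apply: measurable_indic; exact: BB_meas.
apply/andP; split.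
  rewrite -lee_fin -hZ /muY fineK; last exact: intY_fin.
  apply: ge0_le_integral => //.
  - by move=> x _; rewrite lee_fin.
  - exact/measurable_EFinP.
  - by move=> x _; have /andP[] := vv_bnd x; rewrite lee_fin.
rewrite -lee_fin -hZ /muY EFinD fineK; last exact: intY_fin.
apply: (@le_trans _ _ (\int[u]_(x in setT) ((Yf x)%:E + (M%:R^-1)%:E))%E).
  apply: ge0_le_integral => //; try (by move=> x _; rewrite lee_fin /vv divr_ge0);
    try (by move=> x _; rewrite -EFinD lee_fin addr_ge0);
    try (by apply: emeasurable_funD; [exact/measurable_EFinP | exact: measurable_cst]).
  by move=> x _; have /andP[_] := vv_bnd x; rewrite -EFinD lee_fin.
rewrite ge0_integralD //; try (by move=> x _; rewrite lee_fin ?invr_ge0);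
  try exact/measurable_EFinP; try exact: measurable_cst.
by rewrite integral_cst // [X in (_ * X)%E]probability_setT mule1.
Qed.


Lemma expR_quad (x : R) : x <= 1/2 -> expR x <= 1 + x + 2 * x ^+ 2.
Proof.
move=> hx.
have h1 : 1 - x <= expR (- x) by have := expR_ge1Dx (- x).
have h2 : expR x * expR (- x) = 1 by rewrite -expRD addrN expR0.
have h3 := expR_gt0 x.
set e := expR x in h2 h3 *; set e' := expR (- x) in h1 h2.
have hq : 1 <= (1 - x) * (1 + x + 2 * x ^+ 2) by nra.
nra.
Qed.

Lemma vv_ge0 m : 0 <= vv m.
Proof. by rewrite /vv divr_ge0. Qed.

Lemma vv_le1 m : vv m <= 1.
Proof.
rewrite /vv ler_pdivrMr ?ltr0n // mul1r ler_nat; exact: (ltn_ord m).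
Qed.

Lemma muZ_ge0 : 0 <= muZ.
Proof. by apply: sumr_ge0 => m _; rewrite mulr_ge0 ?pp_ge0 ?vv_ge0. Qed.

Lemma muZ_le1 : muZ <= 1.
Proof.
rewrite -sum_pp /muZ; apply: ler_sum => m _.
by rewrite -[X in _ <= X]mulr1 ler_wpM2l ?pp_ge0 ?vv_le1.
Qed.

Lemma mgf_bound lam : `|lam| <= 1/4 ->
  \sum_(m < M.+1) pp m * expR (lam * (vv m - muZ)) <= 1 + 2 * lam ^+ 2.
Proof.
move=> hl.
have hb m : `|vv m - muZ| <= 1.
  have := vv_ge0 m; have := vv_le1 m; have := muZ_ge0; have := muZ_le1.
  by move=> *; apply/ler_normlP; split; lra.
apply: (le_trans (y := \sum_(m < M.+1) pp m * (1 + lam * (vv m - muZ)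
        + 2 * (lam ^+ 2)))).
  apply: ler_sum => m _; apply: ler_wpM2l; first exact: pp_ge0.
  apply: (le_trans (expR_quad _ _)).
    have := hb m; move: hl; rewrite !ler_norml => /andP[? ?] /andP[? ?]; nra.
  rewrite lerD2l ler_wpM2l // exprMn -[X in _ <= X]mulr1 ler_wpM2l ?sqr_ge0 //.
  have := hb m; rewrite ler_norml => /andP[? ?]; nra.
have -> : \sum_(m < M.+1) pp m * (1 + lam * (vv m - muZ) + 2 * lam ^+ 2)
  = \sum_(m < M.+1) pp m * (1 + 2 * lam ^+ 2) +
    lam * \sum_(m < M.+1) (pp m * vv m - muZ * pp m).
  by rewrite mulr_sumr -big_split; apply: eq_bigr => m _ /=; ring.
rewrite -mulr_suml sum_pp mul1r sumrB -mulr_sumr sum_pp mulr1.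
by rewrite /muZ subrr mulr0 addr0.
Qed.


Variables (dO : measure_display) (O : measurableType dO) (P : probability O R).
Variables (k : nat) (X : 'I_k -> O -> T).
Hypothesis mX : forall i, measurable_fun setT (X i).
Hypothesis lawX : forall i (A : set T), measurable A -> P (X i @^-1` A) = u A.
Hypothesis indX : mutually_independent P X.

Lemma mpre i A : measurable A -> measurable (X i @^-1` A).
Proof. by move=> mA; rewrite -[X in measurable X]setTI; exact: mX. Qed.

Definition CC (s : {ffun 'I_k -> 'I_M.+1}) : set O :=
  \bigcap_(i in [set: 'I_k]) (X i @^-1` BB (s i)).

Lemma CC_meas s : measurable (CC s).
Proof.
apply: fin_bigcap_measurable; first exact: finite_finset.
by move=> i _; apply: mpre; exact: BB_meas.
Qed.

Lemma P_CC s : P (CC s) = (\prod_(i < k) pp (s i))%:E.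
Proof.
rewrite /CC indX; last by move=> i; exact: BB_meas.
rewrite -prodEFin; apply: eq_bigr => i _.
rewrite lawX; last exact: BB_meas.
by rewrite u_BB.
Qed.

Lemma P_bigU (I : Type) (r : seq I) (pr : pred I) (F : I -> set O) :
  (forall i, measurable (F i)) ->
  (P (\big[setU/set0]_(i <- r | pr i) F i) <= (\sum_(i <- r | pr i) P (F i))%E)%E.
Proof.
move=> mF; elim: r => [|a r IH]; first by rewrite !big_nil measure0.
rewrite !big_cons; case: (pr a) => //.
apply: (le_trans (measureU2 _ _ _)) => //.
  exact: bigsetU_measurable.
exact: leeD.
Qed.


Definition DD (s : {ffun 'I_k -> 'I_M.+1}) : R := \sum_(i < k) (vv (s i) - muZ).

Lemma chern lam c : `|lam| <= 1/4 ->
  \sum_(s : {ffun 'I_k -> 'I_M.+1} | c <= lam * DD s) \prod_(i < k) pp (s i)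
   <= expR (- c) * (1 + 2 * lam ^+ 2) ^+ k.
Proof.
move=> hl.
have pr0 s : 0 <= \prod_(i < k) pp (s i) by apply: prodr_ge0 => i _; exact: pp_ge0.
apply: (le_trans (y := \sum_(s : {ffun 'I_k -> 'I_M.+1})
   (\prod_(i < k) pp (s i)) * expR (lam * DD s - c))).
  rewrite [X in _ <= X](bigID (fun s => c <= lam * DD s)) /=.
  rewrite -[X in X <= _]addr0; apply: lerD.
    apply: ler_sum => s hs.
    rewrite -[X in X <= _]mulr1 ler_wpM2l //.
    apply: (le_trans _ (expR_ge1Dx _)); rewrite lerDl subr_ge0 //.
  by apply: sumr_ge0 => s _; rewrite mulr_ge0 ?expR_ge0.
have -> : \sum_(s : {ffun 'I_k -> 'I_M.+1}) (\prod_(i < k) pp (s i)) * expR (lam * DD s - c)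
   = expR (- c) * \sum_(s : {ffun 'I_k -> 'I_M.+1})
        \prod_(i < k) (pp (s i) * expR (lam * (vv (s i) - muZ))).
  rewrite mulr_sumr; apply: eq_bigr => s _.
  rewrite addrC expRD mulrCA big_split /=; congr (_ * _); congr (_ * _).
  by rewrite /DD mulr_sumr expR_sum.
rewrite -(bigA_distr_bigA (fun (i : 'I_k) (m : 'I_M.+1) =>
   pp m * expR (lam * (vv m - muZ)))) /=.
rewrite prodr_const card_ord.
apply: ler_wpM2l; first exact: expR_ge0.
apply: lerXn2r; rewrite ?nnegrE.
- by apply: sumr_ge0 => m _; rewrite mulr_ge0 ?pp_ge0 ?expR_ge0.
- by rewrite addr_ge0 // mulr_ge0 // sqr_ge0.
exact: mgf_bound.
Qed.


Lemma conc (eps : R) : 0 < eps -> eps <= 1 -> M%:R^-1 <= eps / 2 ->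
  exists Bad : set O, [/\ measurable Bad,
    (P Bad <= (2 * expR (- (k%:R * eps ^+ 2) / 32))%:E)%E &
    forall w, ~ Bad w -> `|muY - k%:R^-1 * \sum_(i < k) Yf (X i w)| <= eps].
Proof.
move=> e0 e1 hM.
pose lam := eps / 8.
pose c := lam * (k%:R * (eps / 2)).
have lam0 : 0 < lam by rewrite divr_gt0.
pose Bad1 := \big[setU/set0]_(s : {ffun 'I_k -> 'I_M.+1} | c <= lam * DD s) CC s.
pose Bad2 := \big[setU/set0]_(s : {ffun 'I_k -> 'I_M.+1} | c <= (- lam) * DD s) CC s.
have mB1 : measurable Bad1 by apply: bigsetU_measurable => s _; exact: CC_meas.
have mB2 : measurable Bad2 by apply: bigsetU_measurable => s _; exact: CC_meas.
exists (Bad1 `|` Bad2); split.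
- exact: measurableU.
- have hl1 : `|lam| <= 1/4 by rewrite ger0_norm ?ltW //; rewrite /lam; lra.
  have hl2 : `|- lam| <= 1/4 by rewrite normrN.
  have hb : expR (- c) * (1 + 2 * lam ^+ 2) ^+ k <= expR (- (k%:R * eps ^+ 2) / 32).
    apply: (le_trans (y := expR (- c) * expR (2 * lam ^+ 2) ^+ k)).
      apply: ler_wpM2l; first exact: expR_ge0.
      apply: lerXn2r; rewrite ?nnegrE ?expR_ge0 //.
        by rewrite addr_ge0 // mulr_ge0 // sqr_ge0.
      exact: expR_ge1Dx.
    rewrite -expRM_natl -expRD.
    have -> : - c + k%:R * (2 * lam ^+ 2) = - (k%:R * eps ^+ 2) / 32.
      by rewrite /c /lam; field.
    by [].
  apply: (le_trans (measureU2 _ mB1 mB2)).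
  rewrite [X in (_ <= X)%E](_ : _ = (expR (- (k%:R * eps ^+ 2) / 32))%:E +
                                   (expR (- (k%:R * eps ^+ 2) / 32))%:E)%E; last first.
    by rewrite -EFinD; congr (_%:E); ring.
  apply: leeD.
  + rewrite /Bad1; apply: (le_trans (P_bigU _ _ _ CC CC_meas)).
    under eq_bigr do rewrite P_CC.
    rewrite sumEFin lee_fin; apply: le_trans hb; exact: chern.
  + rewrite /Bad2; apply: (le_trans (P_bigU _ _ _ CC CC_meas)).
    under eq_bigr do rewrite P_CC.
    rewrite sumEFin lee_fin; apply: le_trans hb.
    have := chern _ c hl2; by rewrite sqrrN.
move=> w hw.
pose s := [ffun i => idx (X i w)].
have ws : CC s w by move=> i _; rewrite /s ffunE; exact: idxP.
have n1 : ~ (c <= lam * DD s).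
  move=> h; apply: hw; left; rewrite /Bad1.
  rewrite (bigD1 s) //=; by left.
have n2 : ~ (c <= (- lam) * DD s).
  move=> h; apply: hw; right; rewrite /Bad2.
  rewrite (bigD1 s) //=; by left.
move/negP: n1; rewrite -ltNge => n1.
move/negP: n2; rewrite -ltNge => n2.
have hDD1 : DD s < k%:R * (eps / 2) by move: n1; rewrite /c ltr_pM2l.
have hDD2 : - DD s < k%:R * (eps / 2) by move: n2; rewrite /c mulNr -mulrN ltr_pM2l.
set K := k%:R in hDD1 hDD2 *.
have hDD : DD s = \sum_(i < k) vv (s i) - K * muZ.
  by rewrite /DD sumrB sumr_const card_ord mulr_natl.
set SZ := \sum_(i < k) vv (s i) in hDD.
set SY := \sum_(i < k) Yf (X i w).
have h1 : SY <= SZ by apply: ler_sum => i _; rewrite /s ffunE; have /andP[] := vv_bnd (X i w).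
have h2 : SZ <= SY + K * M%:R^-1.
  apply: (le_trans (y := \sum_(i < k) (Yf (X i w) + M%:R^-1))).
    by apply: ler_sum => i _; rewrite /s ffunE; have /andP[] := vv_bnd (X i w).
  by rewrite big_split /= sumr_const card_ord mulr_natl.
have K0 : 0 <= K by rewrite /K ler0n.
have Kpos : 0 < K.
  rewrite lt0r K0 andbT; apply/negP => /eqP K0'.
  by move: hDD1 hDD2; rewrite K0' mul0r; lra.
have /andP[m1 m2] := muY_bnd.
have h3 : K * muY <= K * muZ by rewrite ler_wpM2l.
have h4 : K * muZ <= K * muY + K * M%:R^-1 by rewrite -mulrDr ler_wpM2l.
have h5 : K * M%:R^-1 <= K * (eps / 2) by rewrite ler_wpM2l.
have -> : muY - K^-1 * SY = K^-1 * (K * muY - SY).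
  by field; rewrite gt_eqF.
rewrite normrM ger0_norm ?invr_ge0 // ler_pdivrMl //.
rewrite hDD in hDD1 hDD2.
apply/ler_normlP; split; lra.
Qed.

End partB.

Lemma numeric (R : realType) (n : nat) (delta eps K : R) :
  (1 < n)%N -> 0 < delta -> delta < 1 -> 0 < eps ->
  2 / ((1/64) * eps ^+ 2) * ln (n%:R / delta) <= K ->
  n%:R ^+ 2 * (2 * expR (- (K * eps ^+ 2) / 32)) <= delta ^+ 2.
Proof.
move=> n1 d0 d1 e0 hK.
have n2 : (2 : R) <= n%:R by rewrite ler_nat.
set q := n%:R / delta in hK.
have q0 : 0 < q by rewrite divr_gt0 // (lt_le_trans _ n2).
have nE : n%:R = q * delta by rewrite /q divfK ?gt_eqF.
have q2 : 2 <= q.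
  rewrite /q ler_pdivlMr //; apply: (le_trans _ n2); nra.
have L0 : 0 <= ln q by apply: ln_ge0; lra.
have hK' : 128 * ln q <= K * eps ^+ 2.
  have e2 : 0 < eps ^+ 2 by rewrite exprn_gt0.
  have : 2 / (1 / 64 * eps ^+ 2) * ln q * eps ^+ 2 <= K * eps ^+ 2.
    by rewrite ler_wpM2r // ltW.
  have -> : 2 / (1 / 64 * eps ^+ 2) * ln q * eps ^+ 2 = 128 * ln q.
    by field; rewrite gt_eqF.
  by [].
have hE : expR (- (K * eps ^+ 2) / 32) <= (q ^+ 4)^-1.
  rewrite -(lnK q0) -expRM_natl -expRN ler_expR; lra.
rewrite nE.
apply: (le_trans (y := (q * delta) ^+ 2 * (2 * (q ^+ 4)^-1))).
  rewrite ler_wpM2l ?sqr_ge0 // ler_wpM2l //.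
have -> : (q * delta) ^+ 2 * (2 * (q ^+ 4)^-1) = delta ^+ 2 * (2 / q ^+ 2).
  by field; rewrite gt_eqF.
rewrite -[X in _ <= X]mulr1 ler_wpM2l ?sqr_ge0 // ler_pdivrMr ?exprn_gt0 //.
nra.
Qed.

Lemma dinf_self (R : realType) (f : R -> R) : dinf f f = 0.
Proof.
rewrite /dinf.
have -> : range (fun s => `|f s - f s|) = [set 0 : R].
  apply/seteqP; split => x /=.
    by move=> [s _ <-]; rewrite subrr normr0.
  by move=> ->; exists 0 => //; rewrite subrr normr0.
exact: sup1.
Qed.

Theorem theorem6 (R : realType) :
  exists c : R, 0 < c /\
  forall (d : nat)
    (G : topologicalZmodType)
    (PG : probability (gborel G) R)
    (rho : G -> 'M[R]_d)
    (u : probability (d.-tuple R) R)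
    (n : nat) (pts : 'I_n -> d.-tuple R)
    (eps delta : R) (k : nat)
    (dO : measure_display) (O : measurableType dO) (P : probability O R)
    (T : 'I_k -> O -> d.-tuple R),
    compact [set: G] -> hausdorff_space G ->
    haar_prob PG ->
    orth_rep rho ->
    uniform_on_sphere u ->
    injective pts ->
    0 < eps -> 0 < delta ->
    (forall i, measurable_fun [set: O] (T i)) ->
    (forall i (A : set (d.-tuple R)), measurable A -> P (T i @^-1` A) = u A) ->
    mutually_independent P T ->
    2 / (c * eps ^+ 2) * ln (n%:R / delta) <= k%:R ->
    exists E : set O, [/\ measurable E,
      E `<=` [set w | forall i j : 'I_n,
                 `| dist_mu PG rho u (pts i) (pts j)
                    - dist_hat PG rho (fun l => T l w) (pts i) (pts j) | <= eps] &
      ((1 - delta ^+ 2)%:E <= P E)%E].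
Proof.
exists (1/64); split; first by rewrite divr_gt0.
move=> d G PG rho u n pts eps delta k dO O P T _ _ _ orth _ _ e0 d0 mT lawT indT hk.
have rho_cont : forall i j, continuous (fun g => rho g i j) by case: orth.
have diag : forall w (i j : 'I_n), i = j ->
    `| dist_mu PG rho u (pts i) (pts j)
       - dist_hat PG rho (fun l => T l w) (pts i) (pts j) | <= eps.
  move=> w i j <-; rewrite /dist_mu /dist_hat.
  under eq_integral do rewrite dinf_self.
  under eq_bigr do rewrite dinf_self.
  by rewrite integral0 big1 // mulr0 subrr normr0 ltW.
case: (leP 1 delta) => hd.
  exists set0; split => //; rewrite measure0 lee_fin subr_le0.
  by rewrite expr2; nra.
case: (leqP n 1) => hn.
  exists setT; split => //.
    move=> w _ i j; apply: diag.
    have hi : (i < 1)%N by exact: leq_trans (ltn_ord i) hn.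
    have hj : (j < 1)%N by exact: leq_trans (ltn_ord j) hn.
    by apply: ord_inj; move: hi hj; rewrite !ltnS !leqn0 => /eqP hi /eqP hj; rewrite hi hj.
  rewrite probability_setT lee_fin lerBlDr lerDl sqr_ge0 //.
have hYm : forall I I', measurable_fun setT (Y R G PG d rho I I').
  by move=> I I'; exact: meas_Y.
have Y0' : forall I I' t, 0 <= Y R G PG d rho I I' t by move=> *; exact: Y_ge0.
have Y1' : forall I I' t, Y R G PG d rho I I' t <= 1 by move=> *; exact: Y_le1.
case: (leP eps 1) => he; last first.
  have mu01 : forall I I', 0 <= dist_mu PG rho u I I' <= 1.
    move=> I I'.
    have := muY_bnd R _ _ u _ (hYm I I') (Y0' I I') (Y1' I I') 1 isT.
    have := muY_ge0 R _ _ u (Y R G PG d rho I I') (Y0' I I').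
    have := muZ_le1 R _ _ u _ (hYm I I') (Y0' I I') (Y1' I I') 1 isT.
    move=> h1 h2 /andP[h3 _].
    change (dist_mu PG rho u I I') with (muY R _ _ u (Y R G PG d rho I I')).
    by rewrite h2 /= (le_trans h3 h1).
  have hat01 : forall w I I', 0 <= dist_hat PG rho (fun l => T l w) I I' <= 1.
    move=> w I I'; rewrite /dist_hat.
    change (fun i : 'I_k => dinf (mu_cdf PG rho (T i w) I) (mu_cdf PG rho (T i w) I'))
      with (fun i : 'I_k => Y R G PG d rho I I' (T i w)).
    have s0 : 0 <= \sum_(i < k) Y R G PG d rho I I' (T i w).
      by apply: sumr_ge0 => i _; exact: Y0'.
    have s1 : \sum_(i < k) Y R G PG d rho I I' (T i w) <= k%:R.
      have -> : k%:R = \sum_(i < k) (1 : R) by rewrite sumr_const card_ord.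
      by apply: ler_sum => i _; exact: Y1'.
    case: (posnP k) => [k0|kpos].
      have -> : (k%:R : R)^-1 = 0 by rewrite k0 invr0.
      by rewrite mul0r lexx ler01.
    by rewrite mulr_ge0 ?invr_ge0 //= ler_pdivrMl ?ltr0n // mulr1.
  exists setT; split => //.
  move=> w _ i j; have := mu01 (pts i) (pts j); have := hat01 w (pts i) (pts j).
  move=> /andP[? ?] /andP[? ?]; apply/ler_normlP; split; lra.
  rewrite probability_setT lee_fin lerBlDr lerDl sqr_ge0 //.
have e20 : 0 < eps / 2 by rewrite divr_gt0.
have [N HN] := natinv_lt R (eps / 2) e20.
have M0 : (0 < N.+1)%N by [].
have hM : (N.+1%:R)^-1 <= eps / 2 := ltW HN.
have Yprop : forall ab : 'I_n * 'I_n, exists Bad : set O,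
    [/\ measurable Bad,
        (P Bad <= (2 * expR (- (k%:R * eps ^+ 2) / 32))%:E)%E &
        forall w, ~ Bad w ->
          `| dist_mu PG rho u (pts ab.1) (pts ab.2)
             - dist_hat PG rho (fun l => T l w) (pts ab.1) (pts ab.2) | <= eps].
  move=> [a b].
  exact: (conc R _ _ u (Y R G PG d rho (pts a) (pts b)) (hYm _ _) (Y0' _ _) (Y1' _ _)
            N.+1 M0 dO O P k T mT lawT indT eps e0 he hM).
have [B HB] := choice Yprop.
pose U := \big[setU/set0]_(ab : 'I_n * 'I_n) B ab.
have mU : measurable U.
  by apply: bigsetU_measurable => ab _; have [] := HB ab.
exists (~` U); split.
- exact: measurableC.
- move=> w hw i j; have [_ _ H] := HB (i, j); apply: H => hB; apply: hw.
  by rewrite /U (bigD1 (i, j)) //=; left.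
rewrite probability_setC //.
have hPU : (P U <= (n%:R ^+ 2 * (2 * expR (- (k%:R * eps ^+ 2) / 32)))%:E)%E.
  apply: (le_trans (P_bigU R dO O P _ _ _ B (fun ab => let: And3 h _ _ := HB ab in h))).
  apply: (@le_trans _ _ (\sum_(ab : 'I_n * 'I_n) (2 * expR (- (k%:R * eps ^+ 2) / 32))%:E)%E).
    by apply: lee_sum => ab _; have [] := HB ab.
  rewrite sumEFin lee_fin sumr_const card_prod card_ord.
  by rewrite -[X in X <= _]mulr_natl natrM expr2.
have hnum := numeric R n delta eps k%:R hn d0 hd e0 hk.
rewrite -(fineK (prob_fin P mU)) -EFinB lee_fin.
rewrite -(fineK (prob_fin P mU)) lee_fin in hPU.
lra.
Qed.
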